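(* Let $S$ be a $\Gamma$-AG$^{**}$-groupoid. Then $S$ is intra-regular if and only if $A=(S\Gamma A)\Gamma(S\Gamma A)$ for every left $\Gamma$-ideal $A$ of $S$.
   Context: Let $S$ and $\Gamma$ be nonempty sets with a map $S\times\Gamma\times S\to S$, $(x,\gamma,y)\mapsto x\gamma y$. $S$ is a $\Gamma$-AG-groupoid if $(x\gamma y)\delta z=(z\gamma y)\delta x$ for all $x,y,z\in S$, $\gamma,\delta\in\Gamma$; it is a $\Gamma$-AG$^{**}$-groupoid if moreover $a\alpha(b\beta c)=b\alpha(a\beta c)$ for all $a,b,c\in S$, $\alpha,\beta\in\Gamma$. For subsets $A,B\subseteq S$, $A\Gamma B=\{a\gamma b: a\in A,\gamma\in\Gamma,b\in B\}$. $S$ is intra-regular if for every $a\in S$ there exist $x,y\in S$ and $\beta,\gamma,\delta\in\Gamma$ with $a=(x\beta(a\delta a))\gamma y$. A nonempty subset $A$ is a left $\Gamma$-ideal if $S\Gamma A\subseteq A$. *)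

(* Defs.v *)
Definition gamma_AG {S G : Type} (op : S -> G -> S -> S) : Prop :=
  forall (x y z : S) (g d : G), op (op x g y) d z = op (op z g y) d x.

Definition gamma_AGss {S G : Type} (op : S -> G -> S -> S) : Prop :=
  gamma_AG op /\
  forall (a b c : S) (al be : G), op a al (op b be c) = op b al (op a be c).

Definition gprod {S G : Type} (op : S -> G -> S -> S) (A B : S -> Prop) : S -> Prop :=
  fun s => exists a g b, A a /\ B b /\ s = op a g b.

Definition fullset {S : Type} : S -> Prop := fun _ => True.

Definition subset {S : Type} (A B : S -> Prop) : Prop := forall s, A s -> B s.

Definition set_eq {S : Type} (A B : S -> Prop) : Prop := forall s, A s <-> B s.

Definition left_gamma_ideal {S G : Type} (op : S -> G -> S -> S) (A : S -> Prop) : Prop :=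
  (exists a, A a) /\ subset (gprod op fullset A) A.

Definition intra_regular {S G : Type} (op : S -> G -> S -> S) : Prop :=
  forall a : S, exists (x y : S) (be ga de : G), a = op (op x be (op a de a)) ga y.

(* Main.v *)
Require Import Defs.

Theorem mainTheorem13 (S G : Type) (op : S -> G -> S -> S)
  (hS : inhabited S) (hG : inhabited G) (hAG : gamma_AGss op) :
  intra_regular op <->
  (forall A : S -> Prop, left_gamma_ideal op A ->
     set_eq A (gprod op (gprod op fullset A) (gprod op fullset A))).
Proof.
  destruct hAG as [LI SW].
  assert (MED : forall a b c f g d e, op (op a g b) d (op c e f) = op (op a g c) d (op b e f)).
  { intros. rewrite LI. rewrite (LI c f b e g). rewrite LI. reflexivity. }
  assert (PM : forall x y z w g d e, op (op x g y) d (op z e w) = op (op w g y) d (op z e x)).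
  { intros. rewrite SW. rewrite LI. rewrite SW. reflexivity. }
  split.
  - intros Hir A [ne Hsub] s; split.
    + intros As. destruct (Hir s) as [x [y [be [ga [de Hs]]]]].
      assert (Hw : A (op x de s)).
      { apply Hsub. exists x, de, s. repeat split; auto. }
      assert (Hs2 : s = op (op y be (op x de s)) ga s).
      { rewrite <- LI, <- SW. exact Hs. }
      exists (op y be (op x de s)), ga, s. repeat split.
      * exists y, be, (op x de s). repeat split; auto.
      * exists (op y be (op x de s)), ga, s. repeat split; auto.
      * exact Hs2.
    + intros [p [d [q [_ [[t [e [b [_ [Hb Hq]]]]] Hs]]]]].
      apply Hsub. exists p, d, q. repeat split; auto.
      apply Hsub. exists t, e, b. repeat split; auto.
  - intros H a. destruct hS as [s0]. destruct hG as [g0].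
    assert (HS : forall s, exists p h q, s = op p h q).
    { intros s. assert (Hf : left_gamma_ideal op (@fullset S)).
      { split. exists s0; exact I. intros x _; exact I. }
      destruct (proj1 (H _ Hf s) I) as [x [d [y [_ [_ E]]]]].
      exists x, d, y; exact E. }
    assert (Hclos : forall s g t e, exists u f, op s g (op t e a) = op u f a).
    { intros s g t e. destruct (HS s) as [p [h [q E]]]. subst s.
      exists (op (op q e p) h t), g.
      rewrite MED. rewrite PM. rewrite LI. reflexivity. }
    set (A := fun b => b = a \/ exists u f, b = op u f a).
    assert (HA : forall x g b, A b -> exists u f, op x g b = op u f a).
    { intros x g b [Eb | [u [f Eb]]]; subst b.
      - exists x, g; reflexivity.
      - apply Hclos. }
    assert (HI : left_gamma_ideal op A).
    { split. exists a; left; reflexivity.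
      intros s [x [g [b [_ [Hb E]]]]]. subst s. right. apply HA; exact Hb. }
    destruct (proj1 (H A HI a) (or_introl eq_refl)) as
      [p [d [q [[x [g [b [_ [Hb Ep]]]]] [[y [e [c [_ [Hc Eq]]]]] Ea]]]]].
    destruct (HA x g b Hb) as [s1 [g1 E1]].
    destruct (HA y e c Hc) as [t1 [e1 E2]].
    subst p q. rewrite E1, E2, MED in Ea.
    set (P := op s1 g1 t1) in *.
    exists (op P e1 a), P, d, d, e1.
    assert (Ha2 : a = op a d (op P e1 a)).
    { rewrite SW. exact Ea. }
    transitivity (op a d (op P e1 a)). exact Ha2.
    rewrite LI. rewrite <- Ea. reflexivity.
Qed.
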